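(* Let $q$ be a power of an odd prime, $n>3$ an odd integer with $\gcd(n,q-1)=1$, $\delta\in\mathbb{F}_{q^n}^*$ with $\delta\neq1$ and multiplicative order of $\delta$ dividing $q-1$, and $0<r<n$ an integer with $\gcd(r,n)=1$. Then $S(x)=x^q+\delta x^{q^{2r+1}}$ is an exceptional scattered polynomial of index $r+1$ over $\mathbb{F}_{q^n}$.
   Context: For a polynomial $S$ with coefficients in $\mathbb{F}_{q^n}$, a positive integer $m$ and a nonnegative integer $t$, $S$ is scattered of index $t$ over $\mathbb{F}_{q^{mn}}$ if for all $y,z\in\mathbb{F}_{q^{mn}}^*$, $\frac{S(y)}{y^{q^t}}=\frac{S(z)}{z^{q^t}}$ implies $y/z\in\mathbb{F}_q$. $S$ is exceptional scattered of index $t$ (over $\mathbb{F}_{q^n}$) if there are infinitely many $m\in\mathbb{N}$ such that $S$ is scattered of index $t$ over $\mathbb{F}_{q^{mn}}$. *)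

(* Defs.v *)
From HB Require Import structures.
From mathcomp Require Import all_boot all_order all_algebra all_field.
Set Implicit Arguments. Unset Strict Implicit. Unset Printing Implicit Defensive.
Import GRing.Theory.
Local Open Scope ring_scope.

(* The polynomial S in {poly F} (F = F_{q^n}), viewed over an extension field L
   via the embedding iota : F -> L, is scattered of index t over L:
   for all y, z in L^*, S(y)/y^(q^t) = S(z)/z^(q^t) implies y/z in F_q,
   where F_q (inside L) is the fixed field of x |-> x^q. *)
Definition scattered_over (F L : fieldType) (iota : {rmorphism F -> L})
  (q t : nat) (S : {poly F}) : Prop :=
  forall y z : L, y != 0 -> z != 0 ->
    (map_poly iota S).[y] / y ^+ (q ^ t) = (map_poly iota S).[z] / z ^+ (q ^ t) ->
    (y / z) ^+ q = y / z.

(* S (with coefficients in F, #|F| = q^n) is exceptional scattered of index t: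
   for infinitely many m, S is scattered of index t over F_{q^{mn}}, i.e. over
   every finite field L of order q^(m n) containing (an embedded copy of) F. *)
Definition exceptional_scattered (F : finFieldType) (q n t : nat) (S : {poly F}) : Prop :=
  forall M : nat, exists m : nat, (M < m)%N /\
    forall (L : finFieldType) (iota : {rmorphism F -> L}),
      #|L| = (q ^ (m * n))%N -> scattered_over iota q t S.

(* Main.v *)
Require Import Defs.
From HB Require Import structures.
From mathcomp Require Import all_boot all_order all_algebra all_field.
From mathcomp Require Import ring zify.
Import GRing.Theory.
Local Open Scope ring_scope.
Set Implicit Arguments. Unset Strict Implicit.

Lemma bez (a b : nat) : (0 < a)%N -> coprime a b ->
  exists u v : nat, (a * u = 1 + b * v)%N.
Proof.
move=> a0 cab; case: (egcdnP b a0) => km kn E _.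
exists km, kn; move/eqP: cab => g; rewrite g in E; lia.
Qed.

Lemma frob_iter (R : pzSemiRingType) (x : R) (q c : nat) :
  x ^+ (q ^ c) = x -> forall u, x ^+ (q ^ (c * u)) = x.
Proof.
move=> h; elim=> [|u IH]; first by rewrite muln0 expn0 expr1.
by rewrite mulnS expnD exprM h IH.
Qed.

Lemma frob_gcd (R : pzSemiRingType) (x : R) (q a b : nat) :
  (0 < a)%N -> coprime a b -> x ^+ (q ^ a) = x -> x ^+ (q ^ b) = x ->
  x ^+ q = x.
Proof.
move=> a0 cab ha hb; have [u [v E]] := bez a0 cab.
have := frob_iter ha u; rewrite E expnD expn1 exprM.
by rewrite exprAC (frob_iter hb v) => ->.
Qed.

Lemma mult_gcd (R : pzSemiRingType) (x : R) (a b : nat) :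
  (0 < a)%N -> coprime a b -> x ^+ a = 1 -> x ^+ b = 1 -> x = 1.
Proof.
move=> a0 cab ha hb; have [u [v E]] := bez a0 cab.
have : x ^+ (a * u) = 1 by rewrite exprM ha expr1n.
by rewrite E exprD expr1 exprM hb expr1n mulr1.
Qed.

Lemma pow_sum (R : pzSemiRingType) (d : R) (q N : nat) :
  d ^+ q = d -> d ^+ (\sum_(i < N) q ^ i)%N = d ^+ N.
Proof.
move=> hq; have hi : forall i, d ^+ (q ^ i) = d.
  by elim=> [|i IH]; rewrite ?expr1 // expnSr exprM IH hq.
elim: N => [|N IH]; first by rewrite big_ord0.
by rewrite big_ord_recr /= exprD IH hi exprSr.
Qed.

Unset Implicit Arguments.
Theorem mainTheorem14 (p k q n r : nat) (F : finFieldType) (delta : F) :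
  prime p -> odd p -> (0 < k)%N -> q = (p ^ k)%N ->
  (3 < n)%N -> odd n -> gcdn n q.-1 = 1%N ->
  #|F| = (q ^ n)%N ->
  delta != 0 -> delta != 1 -> delta ^+ q.-1 = 1 ->
  (0 < r)%N -> (r < n)%N -> gcdn r n = 1%N ->
  exceptional_scattered q n r.+1 ('X^q + delta *: 'X^(q ^ (2 * r + 1))).
Proof.
move=> pp podd k0 Hq n3 nodd gnq cardF d0 d1 dq r0 rn grn M.
have p3 : (2 < p)%N.
  have := prime_gt1 pp; case: p pp podd {Hq} => [|[|[|]]] //.
have q0 : (0 < q)%N by rewrite Hq expn_gt0 (ltn_trans _ p3).
have q1 : (0 < q.-1)%N.
  have : (p <= q)%N by rewrite Hq -{1}(expn1 p) leq_pexp2l // (ltnW (ltn_trans _ p3)).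
  lia.
set m := (M * (r * q.-1)).+1.
exists m; split; first by rewrite /m ltnS leq_pmulr // muln_gt0 r0 q1.
set N := (m * n)%N.
have N0 : (0 < N)%N by rewrite /N muln_gt0; lia.
have cmr : coprime r m.
  rewrite /coprime /m -addn1 mulnCA mulnC gcdnMDl gcdn1 //.
have cmq : coprime m q.-1.
  rewrite coprime_sym /coprime /m -addn1 mulnA gcdnMDl gcdn1 //.
have crN : coprime r N by rewrite /N coprimeMr cmr /coprime grn.
have cNq : coprime N q.-1 by rewrite /N coprimeMl cmq /coprime gnq.
move=> L iota cardL y z y0 z0.
have pch : p \in [pchar L].
  apply: (card_finPcharP (n := (k * N)%N)) => //; by rewrite cardL Hq expnM.
have pq : [pchar L].-nat q.
  by rewrite (eq_pnat _ (pcharf_eq pch)) Hq pnatX pnat_id.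
rewrite rmorphD /= map_polyZ !map_polyXn !hornerE.
set d := iota delta.
set T := (q ^ r.+1)%N; set Q := (q ^ (2 * r + 1))%N.
move/eqP; rewrite eqr_div ?expf_neq0 // => /eqP heq.
set b := y * z ^+ (q ^ r) - z * y ^+ (q ^ r).
have Hbq : b ^+ q = y ^+ q * z ^+ T - z ^+ q * y ^+ T.
  rewrite /b exprDn_pchar // exprNn_pchar // !exprMn -!exprM /T expnS mulnC //.
have HbT : b ^+ T = y ^+ T * z ^+ Q - z ^+ T * y ^+ Q.
  have pT : [pchar L].-nat T by rewrite /T pnatX pq.
  rewrite /b exprDn_pchar // exprNn_pchar // !exprMn -!exprM /T /Q.
  by rewrite -expnD addn1 mul2n -addnn addnS.
have E : b ^+ q - d * b ^+ T = (y ^+ q + d * y ^+ Q) * z ^+ T - (z ^+ q + d * z ^+ Q) * y ^+ T.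
  by rewrite Hbq HbT; ring.
rewrite heq subrr in E; move/eqP: E; rewrite subr_eq0 => /eqP E.
have card_frob : forall x : L, x ^+ (q ^ N) = x.
  by move=> x; rewrite -cardL expf_card.
have [b0|bn0] := eqVneq b 0.
  apply: (frob_gcd r0 crN _ (card_frob _)).
  move/eqP: b0; rewrite subr_eq0 => /eqP b0.
  rewrite expr_div_n; apply/eqP; rewrite eqr_div ?expf_neq0 //; apply/eqP.
  by rewrite mulrC -b0 mulrC.
exfalso; move/eqP: d1; apply.
have dq1 : d ^+ q.-1 = 1 by rewrite /d -rmorphXn dq rmorph1.
have dq' : d ^+ q = d by rewrite -(prednK q0) exprS dq1 mulr1.
set e := (\sum_(i < N) q ^ i)%N.
set c := b ^+ e.
have c0 : c != 0 by rewrite expf_neq0.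
have bN1 : b ^+ (q ^ N).-1 = 1.
  apply: (mulfI bn0); rewrite -exprS prednK ?expn_gt0 ?q0 // card_frob mulr1 //.
have cq1 : c ^+ q.-1 = 1 by rewrite /c -exprM mulnC -predn_exp bN1.
have cq : c ^+ q = c by rewrite -(prednK q0) exprS cq1 mulr1.
have cT : c ^+ T = c by have := @frob_iter _ c q 1; rewrite expn1 => /(_ cq r.+1); rewrite mul1n.
have H1 : (b ^+ q) ^+ e = c.
  by rewrite exprAC cq.
have H2 : (d * b ^+ T) ^+ e = d ^+ e * c.
  by rewrite exprMn exprAC cT.
have de : d ^+ e = 1.
  apply: (mulIf c0); rewrite mul1r -H2 -E H1 //.
have dN : d ^+ N = 1 by rewrite -de /e pow_sum.
have : d = 1 := mult_gcd N0 cNq dN dq1.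
by move/eqP; rewrite fmorph_eq1 => /eqP.
Qed.
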